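(* Let $[a,b]\subset\mathbb{R}$ be a compact interval, let $m\geq1$, $r\geq2$, $n\geq0$ be integers, let $0<\alpha\leq1$, and let $\varepsilon_0>0$. For each $\varepsilon\in[0,\varepsilon_0)$ let $A_{r-j}(\cdot,\varepsilon)\in(C^{n,\alpha})^{m\times m}$ for $j=1,\dots,r$, and let $L(\varepsilon):(C^{n+r,\alpha})^{m}\to(C^{n,\alpha})^{m}$ be the continuous linear operator $L(\varepsilon)y:=y^{(r)}+\sum_{j=1}^{r}A_{r-j}(\cdot,\varepsilon)y^{(r-j)}$. Then the following three conditions are equivalent: (I) $A_{r-j}(\cdot,\varepsilon)\to A_{r-j}(\cdot,0)$ in $(C^{n,\alpha})^{m\times m}$ as $\varepsilon\to0+$ for each $j\in\{1,\dots,r\}$; (c1) $\|L(\varepsilon)-L(0)\|\to0$ as $\varepsilon\to0+$, where $\|\cdot\|$ is the operator norm for operators $(C^{n+r,\alpha})^{m}\to(C^{n,\alpha})^{m}$; (c2) $L(\varepsilon)y\to L(0)y$ in $(C^{n,\alpha})^{m}$ as $\varepsilon\to0+$ for every $y\in(C^{n+r,\alpha})^{m}$.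
   Context: $C^{n,\alpha}$ denotes the complex Hölder space of all $n$ times continuously differentiable functions $x:[a,b]\to\mathbb{C}$ with $\|x\|'_{n,\alpha}:=\sup_{a\leq t_1<t_2\leq b}|x^{(n)}(t_2)-x^{(n)}(t_1)|/|t_2-t_1|^{\alpha}<\infty$, normed by $\|x\|_{n,\alpha}:=\sum_{j=0}^{n}\max_{[a,b]}|x^{(j)}|+\|x\|'_{n,\alpha}$. $(C^{n,\alpha})^{m}$ and $(C^{n,\alpha})^{m\times m}$ are the spaces of $m$-column vector-valued and $m\times m$ matrix-valued functions with entries in $C^{n,\alpha}$, normed by the sum of the entries' norms. *)

(* Defs.v *)
From HB Require Import structures.
From mathcomp Require Import all_boot all_order all_algebra.
From mathcomp Require Import all_classical all_reals.
From mathcomp Require Import exp.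
From mathcomp Require Import complex.

Set Implicit Arguments.
Unset Strict Implicit.
Unset Printing Implicit Defensive.

Import Order.TTheory GRing.Theory Num.Theory.
Local Open Scope ring_scope.
Local Open Scope classical_set_scope.

Section Holder.
Variable R : realType.
Local Notation C := R[i].

Definition cabs (z : C) : R := ComplexField.Normc.normc z.

Variables a b : R.

Definition has_deriv_on (f g : R -> C) : Prop :=
  forall t, a <= t <= b -> forall e : R, 0 < e -> exists2 d : R, 0 < d &
    forall s, a <= s <= b -> 0 < `|s - t| < d ->
      cabs ((f s - f t) / ((s - t)%:C)%C - g t) < e.

Definition cont_on (f : R -> C) : Prop :=
  forall t, a <= t <= b -> forall e : R, 0 < e -> exists2 d : R, 0 < d &
    forall s, a <= s <= b -> `|s - t| < d -> cabs (f s - f t) < e.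

(* a chosen derivative within [a,b] (0 if f is not differentiable there);
   for a < b derivatives within [a,b] are unique on [a,b]. *)
Definition dw (f : R -> C) : R -> C :=
  match pselect (exists g, has_deriv_on f g) with
  | left H => proj1_sig (cid H)
  | right _ => fun _ => 0
  end.

Definition dern (j : nat) (f : R -> C) : R -> C := iter j dw f.

Definition Cn (n : nat) (f : R -> C) : Prop :=
  (forall j, (j < n)%N -> has_deriv_on (dern j f) (dern j.+1 f)) /\
  (forall j, (j <= n)%N -> cont_on (dern j f)).

Definition holder_quot (n : nat) (alpha : R) (f : R -> C) : set R :=
  [set q | exists t1 t2, [/\ a <= t1, t1 < t2, t2 <= b &
       q = cabs (dern n f t2 - dern n f t1) / (t2 - t1) `^ alpha]].

Definition holder_semi (n : nat) (alpha : R) (f : R -> C) : R :=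
  sup (holder_quot n alpha f).

Definition max_der (j : nat) (f : R -> C) : R :=
  sup [set q | exists2 t, a <= t <= b & q = cabs (dern j f t)].

Definition holder_norm (n : nat) (alpha : R) (f : R -> C) : R :=
  \sum_(j < n.+1) max_der j f + holder_semi n alpha f.

Definition in_holder (n : nat) (alpha : R) (f : R -> C) : Prop :=
  Cn n f /\ has_ubound (holder_quot n alpha f).

Definition vin_holder m (n : nat) (alpha : R) (y : R -> 'cV[C]_m) : Prop :=
  forall i : 'I_m, in_holder n alpha (fun t => y t i 0).

Definition vholder_norm m (n : nat) (alpha : R) (y : R -> 'cV[C]_m) : R :=
  \sum_(i < m) holder_norm n alpha (fun t => y t i 0).

Definition min_holder m (n : nat) (alpha : R) (A : R -> 'M[C]_m) : Prop :=
  forall i j : 'I_m, in_holder n alpha (fun t => A t i j).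

Definition mholder_norm m (n : nat) (alpha : R) (A : R -> 'M[C]_m) : R :=
  \sum_(i < m) \sum_(j < m) holder_norm n alpha (fun t => A t i j).

Definition vder m (k : nat) (y : R -> 'cV[C]_m) : R -> 'cV[C]_m :=
  fun t => \col_i dern k (fun s => y s i 0) t.

(* L y := y^(r) + sum_{j=1}^r A_{r-j} y^(r-j);
   here Ak k = A_k for k < r, i.e. the term j corresponds to k = r - j. *)
Definition Lop m (r : nat) (Ak : 'I_r -> R -> 'M[C]_m) (y : R -> 'cV[C]_m)
  : R -> 'cV[C]_m :=
  fun t => vder r y t + \sum_(k < r) (Ak k t *m vder k y t).

Definition opnorm m (n r : nat) (alpha : R)
  (T : (R -> 'cV[C]_m) -> (R -> 'cV[C]_m)) : R :=
  sup [set q | exists y, [/\ vin_holder (n + r) alpha y,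
        vholder_norm (n + r) alpha y <= 1 &
        q = vholder_norm n alpha (T y)]].

End Holder.

(* Main.v *)
Require Import Defs.
From HB Require Import structures.
From mathcomp Require Import all_boot all_order all_algebra.
From mathcomp Require Import all_classical all_reals.
From mathcomp Require Import exp.
From mathcomp Require Import complex.
From mathcomp Require Import ring lra.
Import Order.TTheory GRing.Theory Num.Theory.
Local Open Scope ring_scope.
Section Calc.
Variable R : realType.
Variables a b : R.
Hypothesis hab : a < b.
Local Notation C := R[i].
Set Implicit Arguments.
Unset Strict Implicit.

Lemma cabs_ge0 (z : C) : 0 <= cabs z.
Proof. case: z => x y; rewrite /cabs /=; exact: sqrtr_ge0. Qed.
Lemma cabsD (x y : C) : cabs (x + y) <= cabs x + cabs y.
Proof. exact: le_normcD. Qed.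
Lemma cabsM (x y : C) : cabs (x * y) = cabs x * cabs y.
Proof. exact: ComplexField.Normc.normcM. Qed.
Lemma cabsN (x : C) : cabs (- x) = cabs x.
Proof. exact: normcN. Qed.
Lemma cabs0 : cabs (0 : C) = 0.
Proof. exact: ComplexField.Normc.normc0. Qed.
Lemma cabsV (x : C) : cabs (x^-1) = (cabs x)^-1.
Proof. exact: ComplexField.Normc.normcV. Qed.
Lemma cabs_eq0 (x : C) : cabs x = 0 -> x = 0.
Proof. exact: ComplexField.Normc.eq0_normc. Qed.
Lemma cabsR (x : R) : cabs (x%:C)%C = `|x|.
Proof. by rewrite /cabs /= expr0n /= addr0 sqrtr_sqr. Qed.
Lemma cabsB (x y : C) : cabs (x - y) = cabs (y - x).
Proof. by rewrite -cabsN opprB. Qed.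
Lemma cabsBD (x y z : C) : cabs (x - z) <= cabs (x - y) + cabs (y - z).
Proof. by have := cabsD (x - y) (y - z); rewrite addrA subrK. Qed.

Lemma small0 (z : C) : (forall e : R, 0 < e -> cabs z < e) -> z = 0.
Proof.
move=> H; have := cabs_ge0 z; rewrite le_eqVlt => /orP [/eqP h | h].
  by apply: cabs_eq0; rewrite h.
by have := H _ h; rewrite ltxx.
Qed.

Definition eqon (f g : R -> C) := forall t, a <= t <= b -> f t = g t.

Lemma near_pt (t : R) : a <= t <= b -> forall d : R, 0 < d ->
  exists s : R, a <= s <= b /\ 0 < `|s - t| < d.
Proof.
move=> /andP [hat htb] d d0.
case: (ltP t b) => htb'.
  exists (t + Num.min (d/2) (b - t)).
  have hm : 0 < Num.min (d/2) (b - t) by rewrite lt_min; apply/andP; split; lra.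
  have hm2 : Num.min (d/2) (b - t) <= d/2 by rewrite ge_min lexx.
  have hm3 : Num.min (d/2) (b - t) <= b - t by rewrite ge_min lexx orbT.
  rewrite addrAC subrr add0r gtr0_norm //; split; [apply/andP; split|apply/andP; split]; lra.
have htb2 : a < t by apply: (lt_le_trans hab).
exists (t - Num.min (d/2) (t - a)).
have hm : 0 < Num.min (d/2) (t - a) by rewrite lt_min; apply/andP; split; lra.
have hm2 : Num.min (d/2) (t - a) <= d/2 by rewrite ge_min lexx.
have hm3 : Num.min (d/2) (t - a) <= t - a by rewrite ge_min lexx orbT.
rewrite addrAC subrr add0r normrN gtr0_norm //; split; [apply/andP; split|apply/andP; split]; lra.
Qed.

Local Notation D := (has_deriv_on a b).

Lemma deriv_unique f g1 g2 : D f g1 -> D f g2 -> eqon g1 g2.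
Proof.
move=> h1 h2 t ht; apply/eqP; rewrite -subr_eq0; apply/eqP/small0 => e e0.
have e20 : 0 < e / 2 by lra.
have [d1 d10 H1] := h1 t ht _ e20.
have [d2 d20 H2] := h2 t ht _ e20.
have hd : 0 < Num.min d1 d2 by rewrite lt_min d10 d20.
have [s [hs /andP [hst1 hst2]]] := near_pt ht hd.
move: hst2; rewrite lt_min => /andP [hs1 hs2].
have := H1 s hs; rewrite hst1 hs1 => /(_ isT) q1.
have := H2 s hs; rewrite hst1 hs2 => /(_ isT) q2.
set q := (f s - f t) / (s - t)%:C%C in q1 q2.
have h := cabsBD (g1 t) q (g2 t); rewrite (cabsB (g1 t) q) in h; lra.
Qed.

Lemma eqonC f g : eqon f g -> eqon g f.
Proof. by move=> h t ht; rewrite h. Qed.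
Lemma eqon_trans f g h : eqon f g -> eqon g h -> eqon f h.
Proof. by move=> h1 h2 t ht; rewrite h1 // h2. Qed.
Lemma eqon_refl f : eqon f f.
Proof. by []. Qed.

Lemma deriv_eqon f f' g g' : eqon f f' -> eqon g g' -> D f g -> D f' g'.
Proof.
move=> ef eg h t ht e e0; have [d d0 H] := h t ht e e0; exists d => // s hs hst.
by rewrite -ef // -ef // -eg //; apply: H.
Qed.

Lemma dw_spec f g : D f g -> eqon (dw a b f) g.
Proof.
move=> h; rewrite /dw; case: pselect => [H|H]; last by exfalso; apply: H; exists g.
case: (cid H) => g' hg' /=; exact: deriv_unique hg' h.
Qed.

Lemma dw_deriv f g : D f g -> D f (dw a b f).
Proof. move=> h; exact: (deriv_eqon (@eqon_refl f) (eqonC (dw_spec h)) h). Qed.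

Lemma dw_nd f : ~ (exists g, D f g) -> dw a b f = fun _ => 0.
Proof. by move=> hn; rewrite /dw; case: pselect. Qed.

Lemma dw_eqon f f' : eqon f f' -> eqon (dw a b f) (dw a b f').
Proof.
move=> ef; case: (pselect (exists g, D f g)) => [[g hg]|hn].
  have hg' : D f' g by apply: deriv_eqon hg.
  by move=> t ht; rewrite (dw_spec hg) // (dw_spec hg').
have hn' : ~ (exists g, D f' g).
  by move=> [g hg]; apply: hn; exists g; apply: deriv_eqon hg => //; exact: eqonC.
by rewrite (dw_nd hn) (dw_nd hn').
Qed.

Lemma cdiff_neq0 (h : R) : h != 0 -> ((h%:C)%C) != 0 :> C.
Proof. by rewrite fmorph_eq0. Qed.

Lemma diff_bound (x : C) (h : R) (y : C) : h != 0 ->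
  cabs x <= (cabs (x / ((h%:C)%C) - y) + cabs y) * `|h|.
Proof.
move=> h0; have hC := cdiff_neq0 h0.
have -> : x = (x / ((h%:C)%C)) * ((h%:C)%C) by rewrite divfK.
rewrite cabsM cabsR mulfK //; apply: ler_wpM2r; first exact: normr_ge0.
by have := cabsD (x / (h%:C)%C - y) y; rewrite subrK.
Qed.

Lemma helper_lt (k x e : R) : 0 <= k -> 0 <= x -> x < e / (k + 1) -> k * x < e.
Proof. move=> hk hx; rewrite ltr_pdivlMr; last lra. nra. Qed.

Lemma deriv_cont f g : D f g -> cont_on a b f.
Proof.
move=> h t ht e e0.
have [d d0 H] := h t ht 1 ltr01.
set K := cabs (g t) + 1.
have hK : 0 <= cabs (g t) := cabs_ge0 _.
have hd : 0 < Num.min d (e / (K + 1)).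
  rewrite lt_min d0 /=; apply: divr_gt0 => //; rewrite /K; lra.
exists (Num.min d (e / (K + 1))) => // s hs; rewrite lt_min => /andP [hs1 hs2].
have [->|hst] := eqVneq s t; first by rewrite subrr cabs0.
have hst0 : s - t != 0 by rewrite subr_eq0.
have := diff_bound (f s - f t) (g t) hst0.
have := H s hs; rewrite normr_gt0 hst0 hs1 => /(_ isT) hq.
have hn := normr_ge0 (s - t).
move=> hb; apply: (le_lt_trans hb).
have : (cabs ((f s - f t) / (s - t)%:C%C - g t) + cabs (g t)) <= K by rewrite /K; lra.
move=> hk; apply: (le_lt_trans (ler_wpM2r hn hk)).
apply: helper_lt => //; rewrite /K; lra.
Qed.

Lemma deriv_const (c : C) : D (fun _ => c) (fun _ => 0).
Proof.
move=> t ht e e0; exists 1 => // s hs hst.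
by rewrite subrr mul0r subr0 cabs0.
Qed.

Lemma deriv_lin (c0 : R) : D (fun t => ((t - c0)%:C)%C) (fun _ => 1).
Proof.
move=> t ht e e0; exists 1 => // s hs /andP [hst _].
have hst0 : s - t != 0 by rewrite -normr_gt0.
have -> : (s - c0)%:C%C - (t - c0)%:C%C = ((s - t)%:C)%C :> C.
  by rewrite -rmorphB; congr (_%:C)%C; ring.
by rewrite divff ?cdiff_neq0 // subrr cabs0.
Qed.

Lemma deriv_add f f' g g' : D f f' -> D g g' ->
  D (fun t => f t + g t) (fun t => f' t + g' t).
Proof.
move=> hf hg t ht e e0.
have e20 : 0 < e / 2 by lra.
have [d1 d10 H1] := hf t ht _ e20.
have [d2 d20 H2] := hg t ht _ e20.
exists (Num.min d1 d2); first by rewrite lt_min d10 d20.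
move=> s hs /andP [hst]; rewrite lt_min => /andP [h1 h2].
have q1 := H1 s hs; rewrite hst h1 in q1; have {}q1 := q1 isT.
have q2 := H2 s hs; rewrite hst h2 in q2; have {}q2 := q2 isT.
have -> : (f s + g s - (f t + g t)) / (s - t)%:C%C - (f' t + g' t) =
  ((f s - f t) / (s - t)%:C%C - f' t) + ((g s - g t) / (s - t)%:C%C - g' t) by ring.
apply: (le_lt_trans (cabsD _ _)); lra.
Qed.

Lemma deriv_scale (c : C) f f' : D f f' ->
  D (fun t => c * f t) (fun t => c * f' t).
Proof.
move=> hf t ht e e0.
have hc := cabs_ge0 c.
have e20 : 0 < e / (cabs c + 1) by apply: divr_gt0 => //; lra.
have [d1 d10 H1] := hf t ht _ e20.
exists d1 => // s hs hst.
have -> : (c * f s - c * f t) / (s - t)%:C%C - c * f' t =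
  c * ((f s - f t) / (s - t)%:C%C - f' t) by ring.
rewrite cabsM; apply: helper_lt => //; [exact: cabs_ge0| exact: H1].
Qed.

Lemma deriv_mul f f' g g' : D f f' -> D g g' ->
  D (fun t => f t * g t) (fun t => f' t * g t + f t * g' t).
Proof.
move=> hf hg t ht e e0.
have hgc := deriv_cont hg.
set Kg := cabs (g t) + 1.
set Kf' := cabs (f' t).
set Kf := cabs (f t).
have hKg : 0 <= Kg by rewrite /Kg; have := cabs_ge0 (g t); lra.
have hKf' : 0 <= Kf' by exact: cabs_ge0.
have hKf : 0 <= Kf by exact: cabs_ge0.
have e3 : 0 < e / 3 by lra.
have e1 : 0 < (e / 3) / (Kg + 1) by apply: divr_gt0 => //; lra.
have e2 : 0 < Num.min 1 ((e / 3) / (Kf' + 1)).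
  by rewrite lt_min ltr01 /=; apply: divr_gt0 => //; lra.
have e3' : 0 < (e / 3) / (Kf + 1) by apply: divr_gt0 => //; lra.
have [d1 d10 H1] := hf t ht _ e1.
have [d2 d20 H2] := hgc t ht _ e2.
have [d3 d30 H3] := hg t ht _ e3'.
exists (Num.min d1 (Num.min d2 d3)); first by rewrite !lt_min d10 d20 d30.
move=> s hs /andP [hst]; rewrite !lt_min => /andP [h1 /andP [h2 h3]].
have q1 := H1 s hs; rewrite hst h1 in q1; have {}q1 := q1 isT.
have q2 := H2 s hs h2; rewrite lt_min in q2; case/andP: q2 => q2a q2b.
have q3 := H3 s hs; rewrite hst h3 in q3; have {}q3 := q3 isT.
have -> : (f s * g s - f t * g t) / (s - t)%:C%C - (f' t * g t + f t * g' t) =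
  ((f s - f t) / (s - t)%:C%C - f' t) * g s + f' t * (g s - g t)
  + f t * ((g s - g t) / (s - t)%:C%C - g' t) by ring.
set X1 := ((f s - f t) / (s - t)%:C%C - f' t).
set X3 := ((g s - g t) / (s - t)%:C%C - g' t).
have hgs : cabs (g s) <= Kg.
  have := cabsBD (g s) (g t) 0; rewrite !subr0 /Kg; lra.
have t1 : cabs (X1 * g s) < e / 3.
  rewrite cabsM mulrC; apply: (le_lt_trans (ler_wpM2r (cabs_ge0 _) hgs)).
  by apply: helper_lt => //; exact: cabs_ge0.
have t2 : cabs (f' t * (g s - g t)) < e / 3.
  by rewrite cabsM; apply: helper_lt => //; exact: cabs_ge0.
have t3 : cabs (f t * X3) < e / 3.
  by rewrite cabsM; apply: helper_lt => //; exact: cabs_ge0.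
have := cabsD (X1 * g s + f' t * (g s - g t)) (f t * X3).
have := cabsD (X1 * g s) (f' t * (g s - g t)).
lra.
Qed.

Lemma mvt_aux f g (B : R) : D f g -> (forall t, a <= t <= b -> cabs (g t) <= B) ->
  forall t1 t2, a <= t1 -> t1 <= t2 -> t2 <= b -> forall eps : R, 0 < eps ->
  cabs (f t2 - f t1) <= (B + eps) * (t2 - t1).
Proof.
move=> hf hB t1 t2 h1 h12 h2 eps heps.
have hB0 : 0 <= B.
  by apply: le_trans (hB a _); [exact: cabs_ge0| apply/andP; split; lra].
pose S : set R := fun s => t1 <= s <= t2 /\ cabs (f s - f t1) <= (B + eps) * (s - t1).
have S0 : S t1 by split; [apply/andP; split; lra| rewrite !subrr cabs0 mulr0].
have Sub : ubound S t2 by move=> s [/andP [_ ?] _].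
have hsup : has_sup S by split; [exists t1| exists t2].
set sg := sup S.
have hsg1 : t1 <= sg by apply: sup_upper_bound.
have hsg2 : sg <= t2 by apply: ge_sup => //; exists t1.
have hsgab : a <= sg <= b by apply/andP; split; lra.
have [d d0 Hd] := hf sg hsgab eps heps.
have loc : forall s, a <= s <= b -> `|s - sg| < d ->
    cabs (f s - f sg) <= (B + eps) * `|s - sg|.
  move=> s hs hsd; have [->|hne] := eqVneq s sg.
    by rewrite !subrr cabs0 normr0 mulr0.
  have hne0 : s - sg != 0 by rewrite subr_eq0.
  have hb := diff_bound (f s - f sg) (g sg) hne0.
  have := Hd s hs; rewrite normr_gt0 hne0 hsd => /(_ isT) hq.
  have hg := hB sg hsgab; have hn := normr_ge0 (s - sg).
  apply: le_trans hb _; apply: ler_wpM2r => //; lra.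
have inS : S sg.
  have [s Ss hs] := sup_adherent d0 hsup; rewrite -/sg in hs.
  have hssg : s <= sg := sup_upper_bound hsup Ss.
  case: Ss => /andP [hs1 hs2] hs3.
  split; first by apply/andP.
  have hsab : a <= s <= b by apply/andP; split; lra.
  have := loc s hsab; rewrite ler0_norm ?subr_le0 // => /(_ ltac:(lra)) hl.
  have hc := cabsBD (f sg) (f s) (f t1); rewrite (cabsB (f sg) (f s)) in hc.
  nra.
case: (ltP sg t2) => hlt; last first.
  have -> : t2 = sg by apply/eqP; rewrite eq_le hlt hsg2.
  by case: inS.
exfalso.
set m := Num.min (d/2) (t2 - sg).
have hm : 0 < m by rewrite lt_min; apply/andP; split; lra.
have hm2 : m <= d/2 by rewrite ge_min lexx.
have hm3 : m <= t2 - sg by rewrite ge_min lexx orbT.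
have Ss' : S (sg + m).
  split; first by apply/andP; split; lra.
  have hsab : a <= sg + m <= b by apply/andP; split; lra.
  have := loc (sg + m) hsab; rewrite addrAC subrr add0r gtr0_norm // => /(_ ltac:(lra)) hl.
  have hc := cabsBD (f (sg + m)) (f sg) (f t1).
  case: inS => _ hi.
  nra.
have := sup_upper_bound hsup Ss'; rewrite -/sg; lra.
Qed.

Lemma mvt f g (B : R) : D f g -> (forall t, a <= t <= b -> cabs (g t) <= B) ->
  forall s t, a <= s <= b -> a <= t <= b -> cabs (f s - f t) <= B * `|s - t|.
Proof.
move=> hf hB.
suff H : forall t1 t2, a <= t1 -> t1 <= t2 -> t2 <= b ->
    cabs (f t2 - f t1) <= B * (t2 - t1).
  move=> s t /andP [hs1 hs2] /andP [ht1 ht2]; case: (leP t s) => hts.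
    by rewrite ger0_norm ?subr_ge0 //; apply: H.
  by rewrite cabsB ler0_norm ?subr_le0 ?opprB; [apply: H => //; lra| lra].
move=> t1 t2 h1 h12 h2; apply/ler_addgt0Pr => e e0.
have hd : 0 <= t2 - t1 by lra.
have he : 0 < e / (t2 - t1 + 1) by apply: divr_gt0 => //; lra.
apply: le_trans (mvt_aux hf hB h1 h12 h2 he) _.
rewrite mulrDl lerD2l mulrAC ler_pdivrMr; last lra.
nra.
Qed.

Variable alpha : R.
Hypothesis ha0 : 0 < alpha.
Hypothesis ha1 : alpha <= 1.

Local Notation quot f := (holder_quot a b 0 alpha f).
Local Notation Q f := (holder_semi a b 0 alpha f).
Local Notation M f := (max_der a b 0 f).

Definition hold (f : R -> C) (K : R) := forall s t, a <= s <= b -> a <= t <= b ->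
  cabs (f s - f t) <= K * `|s - t| `^ alpha.

Lemma haa : a <= a <= b. Proof. by rewrite lexx (ltW hab). Qed.
Lemma hbb : a <= b <= b. Proof. by rewrite lexx (ltW hab). Qed.

Lemma quot_elem f : quot f (cabs (f b - f a) / (b - a) `^ alpha).
Proof. by exists a, b; split => //; lra. Qed.

Lemma Q_ge0 f : 0 <= Q f.
Proof.
rewrite /holder_semi; case: (pselect (has_sup (quot f))) => hs; last by rewrite sup_out.
apply: le_trans (sup_upper_bound hs (quot_elem f)).
apply: divr_ge0; [exact: cabs_ge0| exact: powR_ge0].
Qed.

Lemma M_ge0 f : 0 <= M f.
Proof.
rewrite /max_der.
case: (pselect (has_sup [set q | exists2 t, a <= t <= b & q = cabs (dern a b 0 f t)]%classic)) => hs;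
  last by rewrite sup_out.
apply: le_trans (sup_upper_bound hs (ex_intro2 _ _ a haa erefl)); exact: cabs_ge0.
Qed.

Lemma M_ub f B : (forall t, a <= t <= b -> cabs (f t) <= B) ->
  forall t, a <= t <= b -> cabs (f t) <= M f.
Proof.
move=> hB t ht; rewrite /max_der; apply: (sup_upper_bound _ (ex_intro2 _ _ t ht erefl)).
split; first by exists (cabs (f a)), a => //; exact: haa.
by exists B => q [t' ht' ->]; exact: hB.
Qed.

Lemma M_le f B : (forall t, a <= t <= b -> cabs (f t) <= B) -> M f <= B.
Proof.
move=> hB; rewrite /max_der; apply: ge_sup.
  by exists (cabs (f a)), a => //; exact: haa.
by move=> q [t' ht' ->]; exact: hB.
Qed.

Lemma hold_K0 f K : hold f K -> 0 <= K.
Proof.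
move=> h; have := h b a hbb haa; have hp : 0 < `|b - a| `^ alpha.
  by apply: powR_gt0; rewrite normr_gt0 subr_eq0 gt_eqF.
have := cabs_ge0 (f b - f a) => h1 h2.
have : 0 <= K * `|b - a| `^ alpha by lra.
by rewrite pmulr_lge0.
Qed.

Lemma powR_le_ba (x : R) (r : R) : 0 <= r -> 0 <= x -> x <= b - a -> x `^ r <= (b - a) `^ r.
Proof.
move=> hr hx hxb; apply: (ge0_ler_powR hr) => //; rewrite nnegrE //; lra.
Qed.

Lemma hold_Q f K : hold f K -> has_ubound (quot f) /\ Q f <= K.
Proof.
move=> h.
have ub : ubound (quot f) K.
  move=> q [t1 [t2 [h1 h12 h2 ->]]].
  have hp : 0 < (t2 - t1) `^ alpha by apply: powR_gt0; lra.
  rewrite ler_pdivrMr //.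
  have := h t2 t1 (ltac:(apply/andP; split; lra)) (ltac:(apply/andP; split; lra)).
  by rewrite gtr0_norm //; lra.
split; first by exists K.
apply: ge_sup => //; exact: (ex_intro _ _ (quot_elem f)).
Qed.

Lemma Q_hold f : has_ubound (quot f) -> hold f (Q f).
Proof.
move=> hu; have hs : has_sup (quot f) by split => //; exact: (ex_intro _ _ (quot_elem f)).
have key : forall t1 t2, a <= t1 -> t1 < t2 -> t2 <= b ->
    cabs (f t2 - f t1) <= Q f * (t2 - t1) `^ alpha.
  move=> t1 t2 h1 h12 h2; have hp : 0 < (t2 - t1) `^ alpha by apply: powR_gt0; lra.
  have hq : quot f (cabs (f t2 - f t1) / (t2 - t1) `^ alpha).
    by exists t1, t2; split.
  by have := sup_upper_bound hs hq; rewrite ler_pdivrMr.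
move=> s t /andP [hs1 hs2] /andP [ht1 ht2]; case: (ltgtP s t) => hst.
- by rewrite cabsB distrC gtr0_norm ?subr_gt0 //; apply: key.
- by rewrite gtr0_norm ?subr_gt0 //; apply: key.
- by rewrite hst !subrr cabs0 normr0 powR0 ?mulr0 // gt_eqF.
Qed.

Lemma hold_bdd f K : hold f K -> forall t, a <= t <= b ->
  cabs (f t) <= cabs (f a) + K * (b - a) `^ alpha.
Proof.
move=> h t ht; have hK := hold_K0 h.
have h1 := h t a ht haa.
have h2 : `|t - a| `^ alpha <= (b - a) `^ alpha.
  apply: powR_le_ba; [exact: ltW ha0| exact: normr_ge0| ]; case/andP: ht => ? ?.
  by rewrite ger0_norm; lra.
have h3 := cabsBD (f t) (f a) 0; rewrite !subr0 in h3.
have h4 := ler_wpM2l hK h2.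
lra.
Qed.

Lemma hold_cont f K : hold f K -> cont_on a b f.
Proof.
move=> h t ht e e0; have hK := hold_K0 h.
have hE : 0 < e / (K + 1) by apply: divr_gt0 => //; lra.
exists ((e / (K + 1)) `^ (alpha^-1)); first exact: powR_gt0.
move=> s hs hsd.
have hpow : ((e / (K + 1)) `^ (alpha^-1)) `^ alpha = e / (K + 1).
  by rewrite -powRrM mulVf ?gt_eqF // powRr1 //; lra.
have hlt : `|s - t| `^ alpha < e / (K + 1).
  rewrite -hpow; apply: (gt0_ltr_powR ha0) => //; rewrite nnegrE ?normr_ge0 //.
  exact: powR_ge0.
apply: le_lt_trans (h s t hs ht) _; apply: helper_lt => //; exact: powR_ge0.
Qed.

Lemma H0_iff f : in_holder a b 0 alpha f <-> cont_on a b f /\ has_ubound (quot f).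
Proof.
rewrite /in_holder /Cn; split => [[[_ hc] hu]|[hc hu]].
  by split => //; exact: (hc 0%N (leqnn 0)).
by split => //; split => // j; rewrite leqn0 => /eqP ->.
Qed.

Lemma H0_of_hold f K : hold f K -> in_holder a b 0 alpha f /\ Q f <= K.
Proof.
move=> h; have [hu hQ] := hold_Q h; split => //; apply/H0_iff; split => //.
exact: hold_cont h.
Qed.

Lemma H0_hold f : in_holder a b 0 alpha f -> hold f (Q f).
Proof. by move/H0_iff => [_ hu]; exact: Q_hold. Qed.

Lemma H0_M f : in_holder a b 0 alpha f -> forall t, a <= t <= b -> cabs (f t) <= M f.
Proof. move/H0_hold => h; apply: M_ub; exact: hold_bdd h. Qed.

Lemma N0E f : holder_norm a b 0 alpha f = M f + Q f.
Proof. by rewrite /holder_norm big_ord1. Qed.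

Local Notation H0 f := (in_holder a b 0 alpha f).
Local Notation N0 f := (holder_norm a b 0 alpha f).

Lemma N0_ge0 f : 0 <= N0 f.
Proof. rewrite N0E; exact: addr_ge0 (M_ge0 f) (Q_ge0 f). Qed.

Lemma sum0 f g : H0 f -> H0 g ->
  H0 (fun t => f t + g t) /\ N0 (fun t => f t + g t) <= N0 f + N0 g.
Proof.
move=> hf hg; have hf' := H0_hold hf; have hg' := H0_hold hg.
have hh : hold (fun t => f t + g t) (Q f + Q g).
  move=> s t hs ht.
  have -> : f s + g s - (f t + g t) = (f s - f t) + (g s - g t) by ring.
  apply: le_trans (cabsD _ _) _; rewrite mulrDl; apply: lerD; [exact: hf'| exact: hg'].
have [hH hQ] := H0_of_hold hh; split => //.
have hM : M (fun t => f t + g t) <= M f + M g.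
  apply: M_le => t ht; apply: le_trans (cabsD _ _) _.
  by apply: lerD; [exact: H0_M| exact: H0_M].
rewrite !N0E; lra.
Qed.

Lemma scale0 (c : C) f : H0 f ->
  H0 (fun t => c * f t) /\ N0 (fun t => c * f t) <= cabs c * N0 f.
Proof.
move=> hf; have hf' := H0_hold hf; have hc := cabs_ge0 c.
have hh : hold (fun t => c * f t) (cabs c * Q f).
  move=> s t hs ht; rewrite -mulrBr cabsM -mulrA; apply: ler_wpM2l => //; exact: hf'.
have [hH hQ] := H0_of_hold hh; split => //.
have hM : M (fun t => c * f t) <= cabs c * M f.
  by apply: M_le => t ht; rewrite cabsM; apply: ler_wpM2l => //; exact: H0_M.
rewrite !N0E mulrDr; lra.
Qed.

Lemma mul0 f g : H0 f -> H0 g ->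
  H0 (fun t => f t * g t) /\ N0 (fun t => f t * g t) <= N0 f * N0 g.
Proof.
move=> hf hg; have hf' := H0_hold hf; have hg' := H0_hold hg.
have hMf := M_ge0 f; have hMg := M_ge0 g; have hQf := Q_ge0 f; have hQg := Q_ge0 g.
have hh : hold (fun t => f t * g t) (M f * Q g + M g * Q f).
  move=> s t hs ht.
  have -> : f s * g s - f t * g t = f s * (g s - g t) + g t * (f s - f t) by ring.
  apply: le_trans (cabsD _ _) _; rewrite !cabsM mulrDl -!mulrA.
  apply: lerD; apply: ler_pM; try exact: cabs_ge0; try exact: H0_M.
  - exact: hg'.
  - exact: hf'.
have [hH hQ] := H0_of_hold hh; split => //.
have hM : M (fun t => f t * g t) <= M f * M g.
  apply: M_le => t ht; rewrite cabsM.
  by apply: ler_pM; try exact: cabs_ge0; exact: H0_M.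
rewrite !N0E; nra.
Qed.

Lemma zero0 : H0 (fun _ => 0) /\ N0 (fun _ => 0) <= 0.
Proof.
have hh : hold (fun _ => 0) 0 by move=> s t _ _; rewrite subrr cabs0 mul0r.
have [hH hQ] := H0_of_hold hh; split => //.
have hM : M (fun _ => 0) <= 0 by apply: M_le => t _; rewrite cabs0.
rewrite N0E; lra.
Qed.

Definition Kba := (b - a) `^ (1 - alpha).
Lemma Kba_ge0 : 0 <= Kba. Proof. exact: powR_ge0. Qed.

Lemma split_pow (x : R) : 0 <= x -> x <= b - a -> x <= Kba * x `^ alpha.
Proof.
move=> hx hxb.
rewrite {1}(_ : x = x `^ (1 - alpha) * x `^ alpha); last first.
  by rewrite -powRD ?subrK ?powRr1 // oner_eq0.
apply: ler_wpM2r; first exact: powR_ge0.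
apply: powR_le_ba => //; rewrite subr_ge0; exact: ha1.
Qed.

Lemma emb0 f g : D f g -> H0 g -> H0 f /\ N0 f <= M f + Kba * M g.
Proof.
move=> hd hg.
have hB := H0_M hg.
have hh : hold f (M g * Kba).
  move=> s t hs ht; apply: le_trans (mvt hd hB hs ht) _.
  rewrite -mulrA; apply: ler_wpM2l; first exact: M_ge0.
  apply: split_pow; first exact: normr_ge0.
  case/andP: hs => ? ?; case/andP: ht => ? ?.
  rewrite ler_norml; apply/andP; split; lra.
have [hH hQ] := H0_of_hold hh; split => //.
rewrite N0E mulrC; lra.
Qed.

Local Notation H n f := (in_holder a b n alpha f).
Local Notation N n f := (holder_norm a b n alpha f).

Lemma dernS j f : dern a b j.+1 f = dern a b j (dw a b f).
Proof. by rewrite /dern iterSr. Qed.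

Lemma quotS n f : holder_quot a b n.+1 alpha f = holder_quot a b n alpha (dw a b f).
Proof. by rewrite /holder_quot dernS. Qed.

Lemma HS_iff n f : H n.+1 f <-> D f (dw a b f) /\ cont_on a b f /\ H n (dw a b f).
Proof.
rewrite /in_holder /Cn quotS; split.
  move=> [[hd hc] hu]; split; first exact: (hd 0%N).
  split; first exact: (hc 0%N).
  split => //; split => j hj.
    by have := hd j.+1 hj; rewrite !dernS.
  by have := hc j.+1 hj; rewrite dernS.
move=> [hd [hc [[hd' hc'] hu]]]; split => //; split.
  by case=> [|j] hj //; have := hd' j hj; rewrite !dernS.
by case=> [|j] hj //; rewrite dernS; exact: hc'.
Qed.

Lemma NS n f : N n.+1 f = M f + N n (dw a b f).
Proof.
rewrite /holder_norm big_ord_recl /holder_semi quotS -addrA; congr (_ + (_ + _)).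
by apply: eq_bigr => i _; rewrite /max_der lift0 dernS.
Qed.

Lemma cont_eqon f f' : eqon f f' -> cont_on a b f -> cont_on a b f'.
Proof.
move=> ef hc t ht e e0; have [d d0 hd] := hc t ht e e0; exists d => // s hs hsd.
by rewrite -!ef //; exact: hd.
Qed.

Lemma quot_eqon f f' : eqon f f' -> quot f = quot f'.
Proof.
move=> ef; rewrite /holder_quot; apply/seteqP; split => q [t1 [t2 [h1 h12 h2 ->]]];
  exists t1, t2; split => //=.
  by rewrite !ef //; apply/andP; split => //; lra.
by rewrite !ef //; apply/andP; split => //; lra.
Qed.

Lemma M_eqon f f' : eqon f f' -> M f = M f'.
Proof.
move=> ef; rewrite /max_der; congr sup; apply/seteqP; split => q [t ht ->];
  exists t => //=; by rewrite ef.
Qed.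

Lemma loc n f f' : eqon f f' -> (H n f <-> H n f') /\ N n f = N n f'.
Proof.
elim: n f f' => [|n IH] f f' ef.
  rewrite !N0E (M_eqon ef) /holder_semi (quot_eqon ef); split => //.
  rewrite !H0_iff (quot_eqon ef); split => -[hc hu]; split => //.
    exact: cont_eqon hc.
  exact: cont_eqon (eqonC ef) hc.
have edw := dw_eqon ef.
have [IH1 IH2] := IH _ _ edw.
rewrite !NS IH2 (M_eqon ef); split => //.
rewrite !HS_iff; split => -[hd [hc hh]].
  split; first exact: deriv_eqon ef edw hd.
  split; first exact: cont_eqon ef hc.
  by apply/IH1.
split; first exact: deriv_eqon (eqonC ef) (eqonC edw) hd.
split; first exact: cont_eqon (eqonC ef) hc.
by apply/IH1.
Qed.

Lemma N_ge0 n f : 0 <= N n f.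
Proof.
elim: n f => [|n IH] f; first exact: N0_ge0.
rewrite NS; exact: addr_ge0 (M_ge0 f) (IH _).
Qed.

Lemma M_le_N n f : M f <= N n f.
Proof.
case: n => [|n]; first by rewrite N0E lerDl; exact: Q_ge0.
by rewrite NS lerDl; exact: N_ge0.
Qed.

Definition K1 := 1 + Kba.
Lemma K1_ge1 : 1 <= K1. Proof. rewrite /K1 lerDl; exact: Kba_ge0. Qed.

Lemma emb n f : H n.+1 f -> H n f /\ N n f <= K1 * N n.+1 f.
Proof.
have hK := Kba_ge0.
elim: n f => [|n IH] f.
  move/HS_iff => [hd [hc hh]].
  have [h0 hN] := emb0 hd hh; split => //.
  rewrite NS /K1; have := M_le_N 0 (dw a b f); have := M_ge0 f; have := N_ge0 0 (dw a b f).
  move=> h1 h2 h3; have := ler_wpM2l hK h3; nra.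
move=> h; have := h; move/HS_iff => [hd [hc hh]].
have [IH1 IH2] := IH _ hh.
have hf : H n.+1 f by apply/HS_iff.
split => //.
rewrite (NS n) (NS n.+1) /K1; have := M_ge0 f; have := N_ge0 n.+1 (dw a b f).
rewrite /K1 in IH2; move=> h1 h2; nra.
Qed.

Lemma H_H0 n f : H n f -> H0 f.
Proof. elim: n f => [|n IH] f // /emb [h _]; exact: IH. Qed.

Lemma deriv_H n f g : D f g -> H n g -> H n.+1 f /\ N n.+1 f = M f + N n g.
Proof.
move=> hd hg; have e : eqon g (dw a b f) by apply: eqonC; exact: dw_spec hd.
have [l1 l2] := loc n e.
rewrite NS -l2; split => //; apply/HS_iff; split; first exact: dw_deriv hd.
split; first exact: deriv_cont hd.
by apply/l1.
Qed.

Lemma M_add f g : H0 f -> H0 g -> M (fun t => f t + g t) <= M f + M g.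
Proof.
move=> hf hg; apply: M_le => t ht; apply: le_trans (cabsD _ _) _.
by apply: lerD; [exact: H0_M| exact: H0_M].
Qed.

Lemma M_scale (c : C) f : H0 f -> M (fun t => c * f t) <= cabs c * M f.
Proof.
move=> hf; apply: M_le => t ht; rewrite cabsM; apply: ler_wpM2l; first exact: cabs_ge0.
exact: H0_M.
Qed.

Lemma M_mul f g : H0 f -> H0 g -> M (fun t => f t * g t) <= M f * M g.
Proof.
move=> hf hg; apply: M_le => t ht; rewrite cabsM.
by apply: ler_pM; try exact: cabs_ge0; exact: H0_M.
Qed.

Lemma sumH n f g : H n f -> H n g ->
  H n (fun t => f t + g t) /\ N n (fun t => f t + g t) <= N n f + N n g.
Proof.
elim: n f g => [|n IH] f g; first exact: sum0.
move=> hf hg; have := hf; have := hg; move/HS_iff => [hdg [_ hg']]; move/HS_iff => [hdf [_ hf']].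
have [h1 h2] := IH _ _ hf' hg'.
have [h3 h4] := deriv_H (deriv_add hdf hdg) h1.
split => //; rewrite h4 !NS.
have := M_add (H_H0 hf) (H_H0 hg); lra.
Qed.

Lemma scaleH n (c : C) f : H n f ->
  H n (fun t => c * f t) /\ N n (fun t => c * f t) <= cabs c * N n f.
Proof.
elim: n f => [|n IH] f; first exact: scale0.
move=> hf; have := hf; move/HS_iff => [hdf [_ hf']].
have [h1 h2] := IH _ hf'.
have [h3 h4] := deriv_H (deriv_scale c hdf) h1.
split => //; rewrite h4 !NS mulrDr.
have := M_scale c (H_H0 hf); lra.
Qed.

Lemma zeroH n : H n (fun _ => 0) /\ N n (fun _ => 0) <= 0.
Proof.
elim: n => [|n [IH1 IH2]]; first exact: zero0.
have [h3 h4] := deriv_H (deriv_const 0) IH1.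
split => //; rewrite h4.
have : M (fun _ : R => 0 : C) <= 0 by apply: M_le => t _; rewrite cabs0.
lra.
Qed.

Lemma cabs1 : cabs (1 : C) = 1.
Proof. by have := cabsR 1; rewrite normr1. Qed.

Lemma subH n f g : H n f -> H n g ->
  H n (fun t => f t - g t) /\ N n (fun t => f t - g t) <= N n f + N n g.
Proof.
move=> hf hg.
have -> : (fun t => f t - g t) = (fun t => f t + (-1) * g t).
  by apply: funext => t; rewrite mulN1r.
have [h1 h2] := scaleH (-1) hg.
have [h3 h4] := sumH hf h1.
split => //; apply: le_trans h4 _; rewrite lerD2l.
by apply: le_trans h2 _; rewrite cabsN cabs1 mul1r.
Qed.

Fixpoint Cm (n : nat) : R := if n is n'.+1 then 1 + 2 * Cm n' * K1 else 1.
Lemma Cm_ge0 n : 0 <= Cm n.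
Proof.
elim: n => [|n IH] /=; first exact: ler01.
have := K1_ge1; nra.
Qed.

Lemma mulH n f g : H n f -> H n g ->
  H n (fun t => f t * g t) /\ N n (fun t => f t * g t) <= Cm n * N n f * N n g.
Proof.
elim: n f g => [|n IH] f g; first by move=> hf hg; rewrite /= mul1r; exact: mul0.
move=> hf hg; have := hf; have := hg; move/HS_iff => [hdg [_ hg']]; move/HS_iff => [hdf [_ hf']].
have [hfn hfN] := emb hf; have [hgn hgN] := emb hg.
have [p1 p2] := IH _ _ hf' hgn.
have [p3 p4] := IH _ _ hfn hg'.
have [s1 s2] := sumH p1 p3.
have [h3 h4] := deriv_H (deriv_mul hdf hdg) s1.
split => //; rewrite h4 /=.
have hM := M_mul (H_H0 hf) (H_H0 hg).
set Nf := N n.+1 f; set Ng := N n.+1 g.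
have eNf : Nf = M f + N n (dw a b f) by rewrite /Nf NS.
have eNg : Ng = M g + N n (dw a b g) by rewrite /Ng NS.
have hC := Cm_ge0 n; have hK := K1_ge1.
have a1 := M_ge0 f; have a2 := M_ge0 g; have a3 := N_ge0 n (dw a b f).
have a4 := N_ge0 n (dw a b g); have a5 := N_ge0 n f; have a6 := N_ge0 n g.
have b1 : M f * M g <= Nf * Ng by apply: ler_pM => //; lra.
have b2 : N n (dw a b f) * N n g <= Nf * (K1 * Ng) by apply: ler_pM => //; lra.
have b3 : N n f * N n (dw a b g) <= (K1 * Nf) * Ng by apply: ler_pM => //; lra.
have c2 := ler_wpM2l hC b2; have c3 := ler_wpM2l hC b3.
rewrite !mulrA in p2 p4 c2 c3.
have e1 : Cm n * Nf * K1 * Ng = Cm n * K1 * Nf * Ng by ring.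
have e2 : Cm n * K1 * Nf * Ng = Cm n * K1 * Nf * Ng by ring.
have e3 : (1 + 2 * Cm n * K1) * Nf * Ng = Nf * Ng + 2 * (Cm n * K1 * Nf * Ng) by ring.
rewrite e3; lra.
Qed.

Lemma sumL n (I : Type) (s : seq I) (F : I -> R -> C) : (forall i, H n (F i)) ->
  H n (fun t => \sum_(i <- s) F i t) /\
  N n (fun t => \sum_(i <- s) F i t) <= \sum_(i <- s) N n (F i).
Proof.
move=> hF; elim: s => [|x s [IH1 IH2]].
  have -> : (fun t => \sum_(i <- [::]) F i t) = (fun _ => 0).
    by apply: funext => t; rewrite big_nil.
  by rewrite big_nil; exact: zeroH.
have -> : (fun t => \sum_(i <- x :: s) F i t) = (fun t => F x t + \sum_(i <- s) F i t).
  by apply: funext => t; rewrite big_cons.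
have [h1 h2] := sumH (hF x) IH1.
split => //; rewrite big_cons; apply: le_trans h2 _; rewrite lerD2l; exact: IH2.
Qed.

Lemma dern_eqon k f g : eqon f g -> eqon (dern a b k f) (dern a b k g).
Proof.
elim: k f g => [|k IH] f g e //.
rewrite !dernS; apply: IH; exact: dw_eqon.
Qed.

Lemma dernH n k f : H (n + k) f -> H n (dern a b k f) /\ N n (dern a b k f) <= N (n + k) f.
Proof.
elim: k f => [|k IH] f; first by rewrite addn0.
rewrite addnS => /HS_iff [_ [_ h]].
have [h1 h2] := IH _ h; rewrite dernS; split => //.
rewrite NS; apply: le_trans h2 _; rewrite lerDr; exact: M_ge0.
Qed.

Lemma emb_iter n p f : H (n + p) f -> H n f /\ N n f <= K1 ^+ p * N (n + p) f.
Proof.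
elim: p f => [|p IH] f; first by rewrite addn0 expr0 mul1r.
rewrite addnS => h; have [h1 h2] := emb h.
have [h3 h4] := IH _ h1; split => //.
apply: le_trans h4 _; rewrite exprSr -mulrA; apply: ler_wpM2l.
  by apply: exprn_ge0; have := K1_ge1; lra.
exact: h2.
Qed.

Lemma dern_scale k (c : C) f : H k f ->
  eqon (dern a b k (fun t => c * f t)) (fun t => c * dern a b k f t).
Proof.
elim: k f => [|k IH] f //.
move=> /HS_iff [hd [_ h]].
rewrite !dernS.
have e : eqon (dw a b (fun t => c * f t)) (fun t => c * dw a b f t).
  exact: dw_spec (deriv_scale c hd).
apply: eqon_trans (dern_eqon k e) _; exact: IH.
Qed.

Lemma dern_zero k : eqon (dern a b k (fun _ => 0)) (fun _ => 0).
Proof.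
elim: k => [|k IH] //; rewrite dernS.
apply: eqon_trans (dern_eqon k (dw_spec (deriv_const 0))) _; exact: IH.
Qed.

Definition psi (q : nat) (t : R) : C := (((t - a)%:C)%C) ^+ q.
Definition Phi (q : nat) (t : R) : C := ((q`!)%:R)^-1 * psi q t.

Lemma deriv_psi q : D (psi q.+1) (fun t => (q.+1)%:R * psi q t).
Proof.
elim: q => [|q IH].
  apply: deriv_eqon (deriv_lin a) => t ht; rewrite /psi ?expr1 ?expr0 //.
  by rewrite mulr1.
have h := deriv_mul (deriv_lin a) IH.
apply: deriv_eqon h => t ht; rewrite /psi.
  by rewrite [RHS]exprS.
rewrite [X in _ = _ * X]exprS [X in 1 * X]exprS.
ring.
Qed.

Lemma deriv_Phi q : D (Phi q.+1) (Phi q).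
Proof.
have h := deriv_scale (((q.+1)`!)%:R)^-1 (deriv_psi q).
apply: deriv_eqon h => // t ht; rewrite /Phi mulrA; congr (_ * _).
rewrite factS natrM invfM mulrAC mulVf ?mul1r //.
by rewrite pnatr_eq0.
Qed.

Lemma Phi0 : eqon (Phi 0) (fun _ => 1).
Proof. by move=> t _; rewrite /Phi /psi expr0 fact0 invr1 mulr1. Qed.

Lemma deriv_Phi0 : D (Phi 0) (fun _ => 0).
Proof. exact: deriv_eqon (eqonC Phi0) (@eqon_refl _) (deriv_const 1). Qed.

Lemma dern_Phi k p : eqon (dern a b k (Phi p))
  (if (k <= p)%N then Phi (p - k) else fun _ => 0).
Proof.
elim: k => [|k IH]; first by rewrite subn0.
rewrite /dern iterS -/(dern a b k (Phi p)).
apply: eqon_trans (dw_eqon IH) _.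
case: (ltngtP k p) => hkp.
- have -> : (p - k = (p - k.+1).+1)%N by rewrite subnS prednK // subn_gt0.
  exact: dw_spec (deriv_Phi _).
- exact: dw_spec (deriv_const 0).
- by rewrite hkp subnn; exact: dw_spec deriv_Phi0.
Qed.

Lemma H_Phi N' q : H N' (Phi q).
Proof.
elim: q N' => [|q IH] N'.
  have [h _] := deriv_H deriv_Phi0 (zeroH N').1; exact: (emb h).1.
have [h _] := deriv_H (deriv_Phi q) (IH N'); exact: (emb h).1.
Qed.

Variables (m r n : nat) (eps0 : R) (A : R -> 'I_r -> R -> 'M[C]_m).
Hypothesis heps0 : 0 < eps0.
Hypothesis hA : forall eps, 0 <= eps -> eps < eps0 -> forall k : 'I_r, min_holder a b n alpha (A eps k).

Definition Dk eps (k : 'I_r) (i j : 'I_m) := fun t => (A eps k t - A 0 k t) i j.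
Definition Tm eps (y : R -> 'cV[C]_m) := fun t => Lop a b (A eps) y t - Lop a b (A 0) y t.
Definition comp (y : R -> 'cV[C]_m) (i : 'I_m) := fun t => y t i 0.

Lemma T_comp eps y i : comp (Tm eps y) i =
  (fun t => \sum_(k < r) \sum_(l < m) Dk eps k i l t * dern a b k (comp y l) t).
Proof.
apply: funext => t; rewrite /comp /Tm /Lop /Dk.
rewrite !mxE !summxE opprD addrACA subrr add0r -sumrB.
apply: eq_bigr => k _; rewrite !mxE -sumrB; apply: eq_bigr => l _.
by rewrite !mxE mulrBl.
Qed.

Definition tends (F : R -> R) := forall e : R, 0 < e -> exists2 d : R, 0 < d &
  forall eps, 0 < eps -> eps < d -> eps < eps0 -> F eps < e.

Lemma tends_le F G : tends F ->
  (forall eps, 0 < eps -> eps < eps0 -> G eps <= F eps) -> tends G.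
Proof.
move=> hF hle e e0; have [d d0 hd] := hF e e0; exists d => // eps h1 h2 h3.
exact: le_lt_trans (hle _ h1 h3) (hd _ h1 h2 h3).
Qed.

Lemma tends_add F G : tends F -> tends G -> tends (fun eps => F eps + G eps).
Proof.
move=> hF hG e e0; have e2 : 0 < e / 2 by lra.
have [d1 d10 H1] := hF _ e2; have [d2 d20 H2] := hG _ e2.
exists (Num.min d1 d2); first by rewrite lt_min d10 d20.
move=> eps h1; rewrite lt_min => /andP [h2 h3] h4.
have := H1 _ h1 h2 h4; have := H2 _ h1 h3 h4; lra.
Qed.

Lemma tends_scale (c : R) F : 0 <= c -> tends F -> tends (fun eps => c * F eps).
Proof.
move=> hc hF e e0; have e2 : 0 < e / (c + 1) by apply: divr_gt0 => //; lra.
have [d d0 hd] := hF _ e2; exists d => // eps h1 h2 h3.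
case: (leP 0 (F eps)) => hF0.
  by apply: helper_lt => //; exact: hd.
by apply: le_lt_trans e0; apply: mulr_ge0_le0 => //; exact: ltW.
Qed.

Lemma tends0 : tends (fun _ => 0).
Proof. by move=> e e0; exists 1 => //. Qed.

Lemma tends_sum (I : Type) (s : seq I) (F : I -> R -> R) :
  (forall i, tends (F i)) -> tends (fun eps => \sum_(i <- s) F i eps).
Proof.
move=> hF; elim: s => [|x s IH].
  have -> : (fun eps => \sum_(i <- [::]) F i eps) = (fun _ => 0).
    by apply: funext => eps; rewrite big_nil.
  exact: tends0.
have -> : (fun eps => \sum_(i <- x :: s) F i eps) = (fun eps => F x eps + \sum_(i <- s) F i eps).
  by apply: funext => eps; rewrite big_cons.
exact: tends_add.
Qed.

Lemma H_D eps k i j : 0 <= eps -> eps < eps0 -> H n (Dk eps k i j).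
Proof.
move=> h1 h2; have -> : Dk eps k i j = (fun t => A eps k t i j - A 0 k t i j).
  by apply: funext => t; rewrite /Dk !mxE.
exact: (subH (hA h1 h2 k i j) (hA (lexx 0) heps0 k i j)).1.
Qed.

Lemma single_le (I : finType) (F : I -> R) i : (forall j, 0 <= F j) -> F i <= \sum_j F j.
Proof. move=> h; rewrite (bigD1 i) //= lerDl; exact: sumr_ge0. Qed.

Lemma dern_bound (k : 'I_r) f : H (n + r) f ->
  H n (dern a b k f) /\ N n (dern a b k f) <= K1 ^+ r * N (n + r) f.
Proof.
move=> h.
have e : (n + r = (n + k) + (r - k))%N by rewrite -addnA subnKC // ltnW.
rewrite e in h; have [h1 h2] := emb_iter h; have [h3 h4] := dernH h1; split => //.
apply: le_trans h4 _; apply: le_trans h2 _; rewrite -e; apply: ler_wpM2r; first exact: N_ge0.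
apply: ler_weXn2l; [exact: K1_ge1| exact: leq_subr].
Qed.

Definition Snorm eps := \sum_(k < r) mholder_norm a b n alpha (fun t => A eps k t - A 0 k t).

Lemma Snorm_ge0 eps : 0 <= Snorm eps.
Proof. by apply: sumr_ge0 => k _; apply: sumr_ge0 => i _; apply: sumr_ge0 => j _; exact: N_ge0. Qed.

Lemma K1r_ge0 : 0 <= K1 ^+ r.
Proof. by apply: exprn_ge0; have := K1_ge1; lra. Qed.

Lemma boundT eps y : 0 <= eps -> eps < eps0 -> vin_holder a b (n + r) alpha y ->
  (forall i, H n (comp (Tm eps y) i)) /\
  vholder_norm a b n alpha (Tm eps y) <=
    Cm n * K1 ^+ r * vholder_norm a b (n + r) alpha y * Snorm eps.
Proof.
move=> h1 h2 hy0.
have hy : forall l, H (n + r) (comp y l) := hy0.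
set V := vholder_norm a b (n + r) alpha y.
have hV : forall l, N (n + r) (comp y l) <= V.
  move=> l; rewrite /V /vholder_norm.
  rewrite (bigD1 l) //= lerDl; apply: sumr_ge0 => j _; exact: N_ge0.
have hC := Cm_ge0 n; have hK := K1r_ge0.
clearbody V.
have key : forall i, H n (comp (Tm eps y) i) /\ N n (comp (Tm eps y) i) <=
    \sum_(k < r) \sum_(l < m) (Cm n * K1 ^+ r * V) * N n (Dk eps k i l).
  move=> i; rewrite T_comp.
  have hF : forall (k : 'I_r) (l : 'I_m),
      H n (fun t => Dk eps k i l t * dern a b k (comp y l) t) /\
      N n (fun t => Dk eps k i l t * dern a b k (comp y l) t) <=
        (Cm n * K1 ^+ r * V) * N n (Dk eps k i l).
    move=> k l; have [d1 d2] := dern_bound k (hy l).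
    have [p1 p2] := mulH (H_D k i l h1 h2) d1.
    split => //; apply: le_trans p2 _.
    have hD := N_ge0 n (Dk eps k i l).
    have q1 : N n (dern a b k (comp y l)) <= K1 ^+ r * V.
      apply: le_trans d2 _; apply: ler_wpM2l; [exact: hK| exact: hV].
    rewrite [X in _ <= X](_ : _ = Cm n * N n (Dk eps k i l) * (K1 ^+ r * V)); last by ring.
    apply: ler_wpM2l => //; exact: mulr_ge0.
  have hG : forall k : 'I_r,
      H n (fun t => \sum_(l < m) Dk eps k i l t * dern a b k (comp y l) t) /\
      N n (fun t => \sum_(l < m) Dk eps k i l t * dern a b k (comp y l) t) <=
        \sum_(l < m) (Cm n * K1 ^+ r * V) * N n (Dk eps k i l).
    move=> k.
    have [s1 s2] := @sumL n _ (index_enum 'I_m)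
      (fun l t => Dk eps k i l t * dern a b k (comp y l) t) (fun l => (hF k l).1).
    split => //; apply: le_trans s2 _; apply: ler_sum => l _; exact: (hF k l).2.
  have [s1 s2] := @sumL n _ (index_enum 'I_r)
    (fun k t => \sum_(l < m) Dk eps k i l t * dern a b k (comp y l) t) (fun k => (hG k).1).
  split => //; apply: le_trans s2 _; apply: ler_sum => k _; exact: (hG k).2.
split; first by move=> i; exact: (key i).1.
rewrite /vholder_norm.
apply: le_trans (ler_sum _ (fun i _ => (key i).2)) _.
rewrite le_eqVlt; apply/orP; left; apply/eqP.
rewrite exchange_big /Snorm mulr_sumr; apply: eq_bigr => k _.
rewrite /mholder_norm mulr_sumr; apply: eq_bigr => i _; rewrite mulr_sumr //.
Qed.

Definition y0 : R -> 'cV[C]_m := fun _ => 0.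

Lemma y0_in N' : vin_holder a b N' alpha y0 /\ vholder_norm a b N' alpha y0 <= 0.
Proof.
have e : forall l, comp y0 l = (fun _ => 0) by move=> l; apply: funext => t; rewrite /comp /y0 mxE.
split; first by move=> l; have := (zeroH N').1; rewrite -(e l).
have e2 : forall l : 'I_m, N N' (comp y0 l) <= 0 by move=> l; rewrite e; exact: (zeroH N').2.
apply: (@le_trans _ _ (\sum_(l < m) (0:R))); last by rewrite big1.
by apply: ler_sum => l _; exact: e2.
Qed.

Definition opset eps := [set q | exists y, [/\ vin_holder a b (n + r) alpha y,
  vholder_norm a b (n + r) alpha y <= 1 & q = vholder_norm a b n alpha (Tm eps y)]]%classic.

Lemma opset_ub eps : 0 <= eps -> eps < eps0 -> ubound (opset eps) (Cm n * K1 ^+ r * Snorm eps).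
Proof.
move=> h1 h2 q [y [hy hy1 ->]]; have [_ hb] := boundT h1 h2 hy.
apply: le_trans hb _.
have hC := Cm_ge0 n; have hK := K1r_ge0; have hS := Snorm_ge0 eps.
have hV : 0 <= vholder_norm a b (n + r) alpha y by apply: sumr_ge0 => l _; exact: N_ge0.
have hCK : 0 <= Cm n * K1 ^+ r by exact: mulr_ge0.
rewrite [X in X <= _](_ : _ = (Cm n * K1 ^+ r * Snorm eps) * vholder_norm a b (n + r) alpha y); last by ring.
rewrite -[X in _ <= X]mulr1; apply: ler_wpM2l; first exact: mulr_ge0.
exact: hy1.
Qed.

Lemma opnorm_le eps : 0 <= eps -> eps < eps0 ->
  opnorm a b n r alpha (Tm eps) <= Cm n * K1 ^+ r * Snorm eps.
Proof.
move=> h1 h2; rewrite /opnorm; apply: ge_sup; last exact: opset_ub.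
exists (vholder_norm a b n alpha (Tm eps y0)), y0; split => //; first exact: (y0_in _).1.
exact: le_trans (y0_in _).2 ler01.
Qed.

Lemma H_low (k : 'I_r) f : H (n + r) f -> H k f.
Proof.
have e : (n + r = k + (n + r - k))%N.
  by rewrite subnKC // ltnW // (leq_trans (ltn_ord k)) // leq_addl.
by rewrite e => h; exact: (emb_iter h).1.
Qed.

Lemma opnorm_ge eps y : 0 <= eps -> eps < eps0 -> vin_holder a b (n + r) alpha y ->
  vholder_norm a b n alpha (Tm eps y) <=
    (1 + vholder_norm a b (n + r) alpha y) * opnorm a b n r alpha (Tm eps).
Proof.
move=> h1 h2 hy0.
have hy : forall l, H (n + r) (comp y l) := hy0.
set V := vholder_norm a b (n + r) alpha y.
have hV0 : 0 <= V by apply: sumr_ge0 => l _; exact: N_ge0.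
set c := (1 + V)^-1.
have hc : 0 < c by rewrite /c invr_gt0; lra.
pose y' := fun t => ((c%:C)%C : C) *: y t.
have hcomp : forall l, comp y' l = (fun t => (c%:C)%C * comp y l t).
  by move=> l; apply: funext => t; rewrite /comp /y' mxE.
have hy' : vin_holder a b (n + r) alpha y'.
  by move=> l; have := (scaleH (c%:C)%C (hy l)).1; rewrite -hcomp.
have hy'1 : vholder_norm a b (n + r) alpha y' <= 1.
  apply: (@le_trans _ _ (c * V)).
    rewrite /V /vholder_norm mulr_sumr; apply: ler_sum => l _.
    have := (scaleH (c%:C)%C (hy l)).2; rewrite -hcomp cabsR gtr0_norm //.
  rewrite /c mulrC ler_pdivrMr; lra.
have hin : opset eps (vholder_norm a b n alpha (Tm eps y')) by exists y'; split.
have hub : has_ubound (opset eps) by exists (Cm n * K1 ^+ r * Snorm eps); exact: opset_ub.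
have hle := ub_le_sup hub hin.
have key : forall i, N n (comp (Tm eps y) i) <= c^-1 * N n (comp (Tm eps y') i).
  move=> i.
  have e : eqon (comp (Tm eps y') i) (fun t => (c%:C)%C * comp (Tm eps y) i t).
    rewrite !T_comp => t ht; rewrite mulr_sumr; apply: eq_bigr => k _.
    rewrite mulr_sumr; apply: eq_bigr => l _.
    by rewrite hcomp (dern_scale _ (H_low k (hy l))) // mulrCA.
  rewrite ((loc n e).2).
  have hT := (boundT h1 h2 hy0).1 i.
  have [g1 g2] := scaleH (c%:C)%C hT.
  have [g3 g4] := scaleH ((c^-1)%:C)%C g1.
  have ef : (fun t => (c^-1)%:C%C * ((c%:C)%C * comp (Tm eps y) i t)) = comp (Tm eps y) i.
    by apply: funext => t; rewrite mulrA -rmorphM mulVf ?gt_eqF // mul1r.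
  rewrite ef in g4.
  apply: le_trans g4 _; rewrite cabsR gtr0_norm ?invr_gt0 //; lra.
apply: (@le_trans _ _ (c^-1 * vholder_norm a b n alpha (Tm eps y'))).
  rewrite /vholder_norm mulr_sumr; apply: ler_sum => i _; exact: key i.
rewrite /c invrK; apply: ler_wpM2l; first lra.
exact: hle.
Qed.

Definition ytest (p : nat) (j : 'I_m) : R -> 'cV[C]_m :=
  fun t => \col_(l < m) (if l == j then Phi p t else 0).

Lemma comp_ytest p j l : comp (ytest p j) l = if l == j then Phi p else (fun _ => 0).
Proof. by apply: funext => t; rewrite /comp /ytest mxE; case: (l == j). Qed.

Lemma ytest_in p j : vin_holder a b (n + r) alpha (ytest p j).
Proof.
move=> l; change (H (n + r) (comp (ytest p j) l)); rewrite comp_ytest.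
by case: (l == j); [exact: H_Phi| exact: (zeroH _).1].
Qed.

Lemma Ttest eps (p : 'I_r) j i : eqon (comp (Tm eps (ytest p j)) i)
  (fun t => Dk eps p i j t +
     \sum_(k < r) (if (k < p)%N then Dk eps k i j t * dern a b k (Phi p) t else 0)).
Proof.
rewrite T_comp => t ht.
have inner : forall k : 'I_r, \sum_(l < m) Dk eps k i l t * dern a b k (comp (ytest p j) l) t
    = Dk eps k i j t * dern a b k (Phi p) t.
  move=> k; rewrite (bigD1 j) //= comp_ytest eqxx big1 ?addr0 // => l hl.
  by rewrite comp_ytest (negbTE hl) dern_zero // mulr0.
rewrite (eq_bigr _ (fun k _ => inner k)).
rewrite (bigD1 p) //= [in RHS](bigD1 p) //= ltnn add0r.
congr (_ + _).
  by rewrite (dern_Phi p p ht) leqnn subnn Phi0 // mulr1.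
apply: eq_bigr => k hk; case: (ltngtP k p) => hkp //.
  by rewrite (dern_Phi k p ht) leqNgt hkp /= mulr0.
by move: hk; rewrite (ord_inj hkp) eqxx.
Qed.

Lemma c2_to_I : (forall y, vin_holder a b (n + r) alpha y ->
    tends (fun eps => vholder_norm a b n alpha (Tm eps y))) ->
  forall (p : 'I_r) i j, tends (fun eps => N n (Dk eps p i j)).
Proof.
move=> hc2.
suff H' : forall q (p : 'I_r), (p < q)%N -> forall i j, tends (fun eps => N n (Dk eps p i j)).
  by move=> p; exact: H' p.+1 p (ltnSn p).
elim=> [|q IH] p hp i j; first by [].
rewrite ltnS leq_eqVlt in hp; case/orP: hp => [/eqP hpq|hpq]; last exact: IH.
have hIH : forall k : 'I_r, (k < p)%N -> tends (fun eps => N n (Dk eps k i j)).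
  by move=> k hk; apply: IH; rewrite -hpq.
apply: (@tends_le (fun eps => vholder_norm a b n alpha (Tm eps (ytest p j)) +
   \sum_(k < r) (if (k < p)%N then (Cm n * N n (dern a b k (Phi p))) * N n (Dk eps k i j) else 0))).
  apply: tends_add; first exact: hc2 (ytest_in p j).
  apply: tends_sum => k; case hk: (k < p)%N => /=; last exact: tends0.
  apply: tends_scale; last exact: hIH.
  by apply: mulr_ge0; [exact: Cm_ge0| exact: N_ge0].
move=> eps h1 h3; have h1' : 0 <= eps := ltW h1.
set X := comp (Tm eps (ytest p j)) i.
pose Fk (k : 'I_r) := if (k < p)%N then (fun t => Dk eps k i j t * dern a b k (Phi p) t)
  else (fun _ => 0).
set Gf := fun t => \sum_(k < r) Fk k t.
have eG : (fun t => \sum_(k < r) (if (k < p)%N then Dk eps k i j t * dern a b k (Phi p) t else 0)) = Gf.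
  apply: funext => t; rewrite /Gf; apply: eq_bigr => k _; rewrite /Fk; by case: ifP.
have hFk : forall k, H n (Fk k) /\ N n (Fk k) <=
    (if (k < p)%N then (Cm n * N n (dern a b k (Phi p))) * N n (Dk eps k i j) else 0).
  move=> k; rewrite /Fk; case: ifP => hk; last exact: zeroH.
  have hd : H n (dern a b k (Phi p)) by exact: (dernH (H_Phi (n + k) p)).1.
  have [m1 m2] := mulH (H_D k i j h1' h3) hd.
  split => //; apply: le_trans m2 _; rewrite le_eqVlt; apply/orP; left; apply/eqP; ring.
have [hG1 hG2] := @sumL n _ (index_enum 'I_r) Fk (fun k => (hFk k).1).
have hX : H n X := (boundT h1' h3 (ytest_in p j)).1 i.
have eD : eqon (Dk eps p i j) (fun t => X t - Gf t).
  move=> t ht; rewrite /X (Ttest eps p j i ht) -eG /=; ring.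
rewrite ((loc n eD).2).
have [s1 s2] := subH hX hG1.
apply: le_trans s2 _; apply: lerD.
  rewrite /X /vholder_norm; rewrite (bigD1 i) //= lerDl; apply: sumr_ge0 => l _; exact: N_ge0.
apply: le_trans hG2 _; apply: ler_sum => k _; exact: (hFk k).2.
Qed.

Lemma I_c1 : (forall k, tends (fun eps => mholder_norm a b n alpha (fun t => A eps k t - A 0 k t))) ->
  tends (fun eps => opnorm a b n r alpha (Tm eps)).
Proof.
move=> hI.
apply: (@tends_le (fun eps => Cm n * K1 ^+ r * Snorm eps)).
  apply: tends_scale; first exact: mulr_ge0 (Cm_ge0 n) K1r_ge0.
  exact: tends_sum.
by move=> eps h1 h3; apply: opnorm_le => //; exact: ltW.
Qed.

Lemma c1_c2 : tends (fun eps => opnorm a b n r alpha (Tm eps)) ->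
  forall y, vin_holder a b (n + r) alpha y ->
    tends (fun eps => vholder_norm a b n alpha (Tm eps y)).
Proof.
move=> hc1 y hy.
apply: (@tends_le (fun eps => (1 + vholder_norm a b (n + r) alpha y) * opnorm a b n r alpha (Tm eps))).
  apply: tends_scale => //.
  have : 0 <= vholder_norm a b (n + r) alpha y by apply: sumr_ge0 => l _; exact: N_ge0.
  lra.
by move=> eps h1 h3; apply: opnorm_ge => //; exact: ltW.
Qed.

Lemma c2_I : (forall y, vin_holder a b (n + r) alpha y ->
    tends (fun eps => vholder_norm a b n alpha (Tm eps y))) ->
  forall k, tends (fun eps => mholder_norm a b n alpha (fun t => A eps k t - A 0 k t)).
Proof.
move=> hc2 k; rewrite /mholder_norm.
apply: tends_sum => i; apply: tends_sum => j.
exact: (c2_to_I hc2 k i j).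
Qed.

End Calc.

Unset Implicit Arguments.
Set Strict Implicit.

Theorem theorem2 (R : realType) (a b : R) (m r n : nat) (alpha eps0 : R)
  (A : R -> 'I_r -> R -> 'M[R[i]]_m) :
  a < b -> (1 <= m)%N -> (2 <= r)%N -> 0 < alpha -> alpha <= 1 -> 0 < eps0 ->
  (forall eps, 0 <= eps -> eps < eps0 ->
     forall k : 'I_r, min_holder a b n alpha (A eps k)) ->
  let L := fun eps y => Lop a b (A eps) y in
  (* (I) *)
  ((forall k : 'I_r, forall e : R, 0 < e -> exists2 d : R, 0 < d &
      forall eps, 0 < eps -> eps < d -> eps < eps0 ->
        mholder_norm a b n alpha (fun t => A eps k t - A 0 k t) < e)
   <->
  (* (c1) *)
   (forall e : R, 0 < e -> exists2 d : R, 0 < d &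
      forall eps, 0 < eps -> eps < d -> eps < eps0 ->
        opnorm a b n r alpha (fun y t => L eps y t - L 0 y t) < e))
  /\
  ((forall k : 'I_r, forall e : R, 0 < e -> exists2 d : R, 0 < d &
      forall eps, 0 < eps -> eps < d -> eps < eps0 ->
        mholder_norm a b n alpha (fun t => A eps k t - A 0 k t) < e)
   <->
  (* (c2) *)
   (forall y : R -> 'cV[R[i]]_m, vin_holder a b (n + r) alpha y ->
    forall e : R, 0 < e -> exists2 d : R, 0 < d &
      forall eps, 0 < eps -> eps < d -> eps < eps0 ->
        vholder_norm a b n alpha (fun t => L eps y t - L 0 y t) < e)).
Proof.
move=> hab hm hr ha0 ha1 heps0 hA L.
have h1 := @I_c1 R a b hab alpha ha0 ha1 m r n eps0 A heps0 hA.
have h2 := @c1_c2 R a b hab alpha ha0 ha1 m r n eps0 A heps0 hA.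
have h3 := @c2_I R a b hab alpha ha0 ha1 m r n eps0 A heps0 hA.
split; split.
- move=> hI; exact: (h1 hI).
- move=> hc1; exact: (h3 (h2 hc1)).
- move=> hI; exact: (h2 (h1 hI)).
- move=> hc2; exact: (h3 hc2).
Qed.
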